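(* Let $\mathcal{F}^\mathcal{P}=(\mu_n,\mathcal{S}_n,L_n,\pi_n)_{n\ge1}$ be the family of product chains induced by $\mathcal{F}$ and $\mathcal{P}$. Then $\mathcal{F}^\mathcal{P}$ has an $L^2$-cutoff if and only if there is a sequence $t_n>0$ such that \[\lim_{n\to\infty}\sum_{i=1}^{\ell_n}d_{n,i,2}(\mu_{n,i},ap_{n,i}t_n)^2=\begin{cases}0,&a>1,\\ \infty,&0<a<1.\end{cases}\] Further, with $\mathcal{T}_n(\epsilon)=\min\{t\ge0:\sum_{i=1}^{\ell_n}d_{n,i,2}(\mu_{n,i},p_{n,i}t)^2\le\epsilon\}$, one has \[T_{n,2}(\mu_n,\sqrt{e^\epsilon-1})\le\mathcal{T}_n(\epsilon)\le T_{n,2}(\mu_n,\sqrt\epsilon)\quad\text{for all }\epsilon>0.\]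
   Context: $\mathcal{F}=\{(\mu_{n,i},\mathcal{S}_{n,i},L_{n,i},\pi_{n,i}):1\le i\le\ell_n,n\ge1\}$ is a triangular array of irreducible continuous-time finite Markov chains (initial distribution $\mu_{n,i}$, generator $L_{n,i}$, stationary distribution $\pi_{n,i}$), and $\mathcal{P}=\{p_{n,i}>0\}$ a triangular array with $\sum_{i=1}^{\ell_n}p_{n,i}\le1$. The product chain has $\mathcal{S}_n=\prod_i\mathcal{S}_{n,i}$, $\mu_n=\mu_{n,1}\times\dots\times\mu_{n,\ell_n}$, $\pi_n=\pi_{n,1}\times\dots\times\pi_{n,\ell_n}$ and $L_n=\sum_{i=1}^{\ell_n}p_{n,i}I_{n,1}\otimes\dots\otimes I_{n,i-1}\otimes L_{n,i}\otimes I_{n,i+1}\otimes\dots\otimes I_{n,\ell_n}$ ($I_{n,i}$ identity on $\mathcal{S}_{n,i}$). For a continuous-time chain, $d_2(\mu,t)=\big(\sum_y|\mu e^{tL}(y)/\pi(y)-1|^2\pi(y)\big)^{1/2}$; $d_{n,2}$, $d_{n,i,2}$ are these for the product chain and the $(n,i)$ component, and $T_{n,2}(\mu_n,\epsilon)=\min\{t\ge0:d_{n,2}(\mu_n,t)\le\epsilon\}$. $L^2$-cutoff: there is $t_n>0$ with $d_{n,2}(\mu_n,(1+a)t_n)\to0$ and $d_{n,2}(\mu_n,(1-a)t_n)\to\infty$ for all $a\in(0,1)$. *)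

(* Defs.v *)
From Stdlib Require Import Reals List Arith ClassicalEpsilon.
Import ListNotations.
Open Scope R_scope.

Definition fsum {X} (s : list X) (f : X -> R) : R :=
  fold_right (fun x acc => f x + acc) 0 s.
Definition fprod {X} (s : list X) (f : X -> R) : R :=
  fold_right (fun x acc => f x * acc) 1 s.

Fixpoint vpow {X} (s : list X) (v : X -> R) (A : X -> X -> R) (k : nat) : X -> R :=
  match k with
  | O => v
  | S k' => fun y => fsum s (fun x => vpow s v A k' x * A x y)
  end.

Definition evol {X} (s : list X) (v : X -> R) (A : X -> X -> R) (t : R) (y : X) : R :=
  epsilon (inhabits 0)
    (fun l => infinite_sum (fun k => t ^ k / INR (fact k) * vpow s v A k y) l).

Definition d2 {X} (s : list X) (pi mu : X -> R) (L : X -> X -> R) (t : R) : R :=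
  sqrt (fsum s (fun y => (Rabs (evol s mu L t y / pi y - 1)) ^ 2 * pi y)).

Definition is_distribution {X} (s : list X) (v : X -> R) : Prop :=
  (forall x, In x s -> 0 <= v x) /\ fsum s v = 1.

Definition is_generator {X} (s : list X) (L : X -> X -> R) : Prop :=
  (forall x y, In x s -> In y s -> x <> y -> 0 <= L x y) /\
  (forall x, In x s -> fsum s (fun y => L x y) = 0).

Inductive reach {X} (s : list X) (L : X -> X -> R) : X -> X -> Prop :=
  | reach_refl x : reach s L x x
  | reach_step x z y : In z s -> 0 < L x z -> reach s L z y -> reach s L x y.

Definition irreducible {X} (s : list X) (L : X -> X -> R) : Prop :=
  forall x y, In x s -> In y s -> reach s L x y.

Definition is_stationary {X} (s : list X) (L : X -> X -> R) (pi : X -> R) : Prop :=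
  is_distribution s pi /\ forall y, In y s -> fsum s (fun x => pi x * L x y) = 0.

Definition finite_chain {X} (s : list X) (mu : X -> R) (L : X -> X -> R) (pi : X -> R) : Prop :=
  NoDup s /\ s <> [] /\ is_distribution s mu /\ is_generator s L /\
  irreducible s L /\ is_stationary s L pi.

(** Component (n,i) (0-based i < ell n) has state space {0,...,m n i - 1}. *)

Fixpoint prod_enum (ms : list nat) : list (list nat) :=
  match ms with
  | [] => [[]]
  | a :: ms' => flat_map (fun k => map (cons k) (prod_enum ms')) (seq 0 a)
  end.

Definition prod_space (ell : nat -> nat) (m : nat -> nat -> nat) (n : nat) : list (list nat) :=
  prod_enum (map (m n) (seq 0 (ell n))).

Definition prod_dist (ell : nat -> nat) (v : nat -> nat -> nat -> R) (n : nat)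
  (x : list nat) : R :=
  fprod (seq 0 (ell n)) (fun i => v n i (nth i x 0%nat)).

(** L_n = sum_i p_{n,i} I (x) ... (x) L_{n,i} (x) ... (x) I  (entrywise) *)
Definition prod_gen (ell : nat -> nat) (p : nat -> nat -> R)
  (L : nat -> nat -> nat -> nat -> R) (n : nat) (x y : list nat) : R :=
  fsum (seq 0 (ell n)) (fun i =>
    p n i * L n i (nth i x 0%nat) (nth i y 0%nat) *
    fprod (seq 0 (ell n)) (fun j =>
      if Nat.eqb j i then 1
      else if Nat.eqb (nth j x 0%nat) (nth j y 0%nat) then 1 else 0)).

Definition dprod ell m (mu pi : nat -> nat -> nat -> R) L p (n : nat) (t : R) : R :=
  d2 (prod_space ell m n) (prod_dist ell pi n) (prod_dist ell mu n) (prod_gen ell p L n) t.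

Definition dcomp (m : nat -> nat -> nat) (mu pi : nat -> nat -> nat -> R)
  (L : nat -> nat -> nat -> nat -> R) (n i : nat) (t : R) : R :=
  d2 (seq 0 (m n i)) (pi n i) (mu n i) (L n i) t.

Definition Ssum ell m mu pi L (p : nat -> nat -> R) (n : nat) (t : R) : R :=
  fsum (seq 0 (ell n)) (fun i => (dcomp m mu pi L n i (p n i * t)) ^ 2).

Definition L2_cutoff (d : nat -> R -> R) : Prop :=
  exists tn : nat -> R, (forall n, 0 < tn n) /\
    forall a, 0 < a < 1 ->
      Un_cv (fun n => d n ((1 + a) * tn n)) 0 /\
      cv_infty (fun n => d n ((1 - a) * tn n)).

Definition min_time (f : R -> R) (eps : R) : R :=
  epsilon (inhabits 0)
    (fun T => 0 <= T /\ f T <= eps /\ forall t, 0 <= t -> f t <= eps -> T <= t).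

(* Main.v *)
Require Import Defs.
From Stdlib Require Import Reals List Arith Lra Lia ClassicalEpsilon Classical.
From Coquelicot Require Import Coquelicot.
Import ListNotations.
Open Scope R_scope.


Section FS.
Context {X : Type}.

Lemma fsum_cons (a : X) l f : fsum (a :: l) f = f a + fsum l f.
Proof. reflexivity. Qed.
Lemma fprod_cons (a : X) l f : fprod (a :: l) f = f a * fprod l f.
Proof. reflexivity. Qed.

Lemma fsum_ext (l : list X) f g : (forall x, In x l -> f x = g x) -> fsum l f = fsum l g.
Proof. induction l; simpl; intros H; auto. rewrite H, IHl; auto. Qed.
Lemma fprod_ext (l : list X) f g : (forall x, In x l -> f x = g x) -> fprod l f = fprod l g.
Proof. induction l; simpl; intros H; auto. rewrite H, IHl; auto. Qed.

Lemma fsum_plus (l : list X) f g : fsum l (fun x => f x + g x) = fsum l f + fsum l g.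
Proof. induction l; simpl; [lra|rewrite IHl; lra]. Qed.
Lemma fsum_minus (l : list X) f g : fsum l (fun x => f x - g x) = fsum l f - fsum l g.
Proof. induction l; simpl; [lra|rewrite IHl; lra]. Qed.
Lemma fsum_scal (l : list X) c f : fsum l (fun x => c * f x) = c * fsum l f.
Proof. induction l; simpl; [lra|rewrite IHl; lra]. Qed.
Lemma fsum_scal_r (l : list X) c f : fsum l (fun x => f x * c) = fsum l f * c.
Proof. induction l; simpl; [lra|rewrite IHl; lra]. Qed.
Lemma fsum_zero (l : list X) : fsum l (fun _ => 0) = 0.
Proof. induction l; simpl; [lra|rewrite IHl; lra]. Qed.
Lemma fsum_le (l : list X) f g : (forall x, In x l -> f x <= g x) -> fsum l f <= fsum l g.
Proof. induction l; simpl; intros H; [lra|]. specialize (IHl (fun x h => H x (or_intror h))). specialize (H a (or_introl eq_refl)). lra. Qed.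
Lemma fsum_nonneg (l : list X) f : (forall x, In x l -> 0 <= f x) -> 0 <= fsum l f.
Proof. intros H. rewrite <- (fsum_zero l). apply fsum_le; auto. Qed.
Lemma fsum_ge_mem (l : list X) f a : (forall x, In x l -> 0 <= f x) -> In a l -> f a <= fsum l f.
Proof. induction l; simpl; intros H Ha; [tauto|].
  assert (0 <= fsum l f) by (apply fsum_nonneg; auto).
  destruct Ha as [<-|Ha]. specialize (H a0 (or_introl eq_refl)); lra.
  specialize (IHl (fun x h => H x (or_intror h)) Ha). specialize (H a0 (or_introl eq_refl)); lra. Qed.
Lemma fsum_zero_inv (l : list X) f : (forall x, In x l -> 0 <= f x) -> fsum l f = 0 -> forall a, In a l -> f a = 0.
Proof. intros H H0 a Ha. pose proof (fsum_ge_mem l f a H Ha). pose proof (H a Ha). lra. Qed.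
Lemma fsum_abs (l : list X) f : Rabs (fsum l f) <= fsum l (fun x => Rabs (f x)).
Proof. induction l; simpl. rewrite Rabs_R0; lra. eapply Rle_trans. apply Rabs_triang. lra. Qed.
Lemma fsum_app (l1 l2 : list X) f : fsum (l1 ++ l2) f = fsum l1 f + fsum l2 f.
Proof. induction l1; simpl; [lra|rewrite IHl1; lra]. Qed.

Lemma fprod_mult (l : list X) f g : fprod l (fun x => f x * g x) = fprod l f * fprod l g.
Proof. induction l; simpl; [lra|rewrite IHl; lra]. Qed.
Lemma fprod_pos (l : list X) f : (forall x, In x l -> 0 < f x) -> 0 < fprod l f.
Proof. induction l; simpl; intros H; [lra|]. apply Rmult_lt_0_compat; auto. Qed.
Lemma fprod_nonneg (l : list X) f : (forall x, In x l -> 0 <= f x) -> 0 <= fprod l f.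
Proof. induction l; simpl; intros H; [lra|]. apply Rmult_le_pos; auto. Qed.
Lemma fprod_inv (l : list X) f : (forall x, In x l -> f x <> 0) -> fprod l (fun x => / f x) = / fprod l f.
Proof. induction l; simpl; intros H. rewrite Rinv_1; auto. rewrite IHl by auto.
  rewrite Rinv_mult; auto. Qed.
End FS.
Lemma fsum_swap {X Y} (l1 : list X) (l2 : list Y) f :
  fsum l1 (fun x => fsum l2 (fun y => f x y)) = fsum l2 (fun y => fsum l1 (fun x => f x y)).
Proof. induction l1; simpl. rewrite <- (fsum_zero l2) at 1. apply fsum_ext; auto. rewrite IHl1, <- fsum_plus. auto. Qed.

Lemma fsum_map {X Y} (h : X -> Y) l f : fsum (map h l) f = fsum l (fun x => f (h x)).
Proof. induction l; simpl; auto. rewrite IHl; auto. Qed.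
Lemma fprod_map {X Y} (h : X -> Y) l f : fprod (map h l) f = fprod l (fun x => f (h x)).
Proof. induction l; simpl; auto. rewrite IHl; auto. Qed.
Lemma fsum_flat_map {X Y} (h : X -> list Y) l f : fsum (flat_map h l) f = fsum l (fun x => fsum (h x) f).
Proof. induction l; simpl; auto. rewrite fsum_app, IHl; auto. Qed.

Lemma fsum_delta (l : list nat) a h : NoDup l -> In a l ->
  fsum l (fun k => if Nat.eqb k a then h k else 0) = h a.
Proof. induction l; simpl; intros Hn Ha; [tauto|]. inversion Hn; subst.
  destruct Ha as [<-|Ha].
  - rewrite Nat.eqb_refl. rewrite (fsum_ext l (fun k => if Nat.eqb k a0 then h k else 0) (fun _ => 0)). rewrite fsum_zero; lra.
    intros x Hx. destruct (Nat.eqb_spec x a0); subst; tauto.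
  - destruct (Nat.eqb_spec a0 a); subst; [tauto|]. rewrite IHl; auto; lra. Qed.

Lemma fprod_pick (l : list nat) f i : NoDup l -> In i l ->
  fprod l f = f i * fprod l (fun j => if Nat.eqb j i then 1 else f j).
Proof. induction l; simpl; intros Hn Ha; [tauto|]. inversion Hn; subst.
  destruct Ha as [<-|Ha].
  - rewrite Nat.eqb_refl. rewrite (fprod_ext l (fun j => if Nat.eqb j a then 1 else f j) f). lra.
    intros x Hx. destruct (Nat.eqb_spec x a); subst; tauto.
  - destruct (Nat.eqb_spec a i); subst; [tauto|]. rewrite (IHl H2 Ha) at 1; lra.
Qed.


Lemma is_derive_fsum {X} (l : list X) (f : X -> R -> R) f' t :
  (forall x, In x l -> is_derive (f x) t (f' x)) ->
  is_derive (fun t => fsum l (fun x => f x t)) t (fsum l f').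
Proof. induction l; simpl; intros H.
  - apply (is_derive_const (K := R_AbsRing) 0 t).
  - apply (is_derive_plus (fun t => f a t) (fun t => fsum l (fun x => f x t))); auto.
Qed.

Lemma is_derive_fprod (l : list nat) f f' t : NoDup l ->
  (forall x, In x l -> is_derive (f x) t (f' x)) ->
  is_derive (fun t => fprod l (fun x => f x t)) t
    (fsum l (fun i => f' i * fprod l (fun j => if Nat.eqb j i then 1 else f j t))).
Proof. induction l; simpl; intros Hn H.
  - apply (is_derive_const (K := R_AbsRing) 1 t).
  - inversion Hn; subst.
    eapply is_derive_ext. intros; reflexivity.
    replace (f' a * ((if Nat.eqb a a then 1 else f a t) * fprod l (fun j => if Nat.eqb j a then 1 else f j t)) +
      fsum l (fun i => f' i * ((if Nat.eqb a i then 1 else f a t) * fprod l (fun j => if Nat.eqb j i then 1 else f j t))))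
    with (f' a * fprod l (fun x => f x t) + f a t * fsum l (fun i => f' i * fprod l (fun j => if Nat.eqb j i then 1 else f j t))).
    + apply Derive.is_derive_mult; auto.
    + rewrite Nat.eqb_refl. f_equal.
      * f_equal. rewrite Rmult_1_l. apply fprod_ext. intros x Hx.
        destruct (Nat.eqb_spec x a); subst; tauto.
      * rewrite <- fsum_scal. apply fsum_ext. intros x Hx.
        destruct (Nat.eqb_spec a x); subst; [tauto|]. ring.
Qed.

Lemma fsum_mult_le {X} (l : list X) a b : (forall x, In x l -> 0 <= a x) -> (forall x, In x l -> 0 <= b x) ->
  fsum l (fun x => a x * b x) <= fsum l a * fsum l b.
Proof. intros Ha Hb. rewrite <- fsum_scal_r. apply fsum_le. intros x Hx.
  apply Rmult_le_compat_l; auto. apply fsum_ge_mem; auto. Qed.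

Section Evol.
Context {X : Type} (s : list X) (v : X -> R) (A : X -> X -> R).

Definition coef (y : X) (k : nat) : R := vpow s v A k y / INR (fact k).

Lemma vpow_S k y : vpow s v A (S k) y = fsum s (fun x => vpow s v A k x * A x y).
Proof. reflexivity. Qed.

Lemma vpow_bound y : exists K C, 0 <= K /\ 0 <= C /\ forall k, Rabs (vpow s v A k y) <= K * C ^ k.
Proof.
  set (B k := fsum s (fun x => Rabs (vpow s v A k x))).
  set (My y := fsum s (fun x => Rabs (A x y))).
  set (M := fsum s (fun y => My y)).
  assert (HMy : forall y, 0 <= My y) by (intros; apply fsum_nonneg; intros; apply Rabs_pos).
  assert (HM : 0 <= M) by (apply fsum_nonneg; auto).
  assert (HB : forall k, 0 <= B k) by (intros; apply fsum_nonneg; intros; apply Rabs_pos).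
  assert (H1 : forall k y, Rabs (vpow s v A (S k) y) <= B k * My y).
  { intros k y0. rewrite vpow_S. eapply Rle_trans. apply fsum_abs.
    eapply Rle_trans; [|apply fsum_mult_le; intros; apply Rabs_pos].
    apply fsum_le. intros. rewrite Rabs_mult. lra. }
  assert (H2 : forall k, B k <= B 0%nat * M ^ k).
  { induction k. simpl; lra.
    apply Rle_trans with (fsum s (fun y => B k * My y)).
    apply fsum_le; intros; apply H1.
    rewrite fsum_scal. fold M. simpl. apply Rle_trans with (B 0%nat * M ^ k * M).
    apply Rmult_le_compat_r; auto. lra. }
  exists (Rabs (v y) + B 0%nat * My y), (M + 1). repeat split.
  - pose proof (HB 0%nat); pose proof (HMy y); pose proof (Rabs_pos (v y)); nra.
  - lra.
  - destruct k. simpl. pose proof (HB 0%nat); pose proof (HMy y); nra.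
    eapply Rle_trans. apply H1.
    apply Rle_trans with (B 0%nat * M ^ k * My y). apply Rmult_le_compat_r; auto.
    assert (M ^ k <= (M+1)^k) by (apply pow_incr; lra).
    assert (0 <= M ^ k) by (apply pow_le; lra).
    change ((M+1)^(S k)) with ((M+1) * (M+1)^k).
    pose proof (HB 0%nat); pose proof (HMy y); pose proof (Rabs_pos (v y)).
    assert (0 <= B 0%nat * My y) by nra.
    assert (B 0%nat * M ^ k * My y <= B 0%nat * My y * (M+1)^k) by (replace (B 0%nat * M ^ k * My y) with ((B 0%nat * My y) * M^k) by ring; apply Rmult_le_compat_l; auto).
    assert (0 <= (M+1)^k) by (apply pow_le; lra).
    set (P := (M+1)^k) in *. set (Q := B 0%nat * My y) in *.
    assert (Q * P <= (Rabs (v y) + Q) * P) by nra.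
    assert (0 <= (Rabs (v y) + Q) * P) by (apply Rmult_le_pos; lra).
    assert ((Rabs (v y) + Q) * P <= (Rabs (v y) + Q) * ((M+1) * P)) by (replace ((Rabs (v y) + Q) * ((M+1) * P)) with (((Rabs (v y) + Q) * P) * (M+1)) by ring; nra).
    lra.
Qed.

Lemma coef_disk y r : CV_disk (coef y) r.
Proof.
  destruct (vpow_bound y) as (K & C & HK & HC & Hb).
  unfold CV_disk.
  apply (@ex_series_le R_AbsRing R_CompleteNormedModule _ (fun n => K * ((C * Rabs r) ^ n / INR (fact n)))).
  - intros n. change (norm (Rabs (coef y n * r ^ n))) with (Rabs (Rabs (coef y n * r ^ n))).
    rewrite Rabs_Rabsolu. unfold coef. rewrite Rabs_mult.
    unfold Rdiv. rewrite Rabs_mult. rewrite <- RPow_abs.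
    assert (0 < INR (fact n)) by (apply INR_fact_lt_0).
    rewrite (Rabs_right (/ INR (fact n))) by (apply Rle_ge, Rlt_le, Rinv_0_lt_compat; auto).
    rewrite Rpow_mult_distr.
    assert (0 <= Rabs r ^ n) by (apply pow_le, Rabs_pos).
    specialize (Hb n).
    assert (0 < / INR (fact n)) by (apply Rinv_0_lt_compat; auto).
    apply Rle_trans with (K * C ^ n * / INR (fact n) * Rabs r ^ n).
    apply Rmult_le_compat_r; auto. apply Rmult_le_compat_r; lra.
    right; ring.
  - exists (K * exp (C * Rabs r)).
    apply (is_series_ext (fun n => scal K (scal (pow_n (C*Rabs r) n) (/ INR (fact n))))).
    { intros n. rewrite pow_n_pow. unfold scal; simpl; unfold mult; simpl. unfold Rdiv. ring. }
    change (K * exp (C * Rabs r)) with (@scal R_AbsRing R_NormedModule K (exp (C * Rabs r))).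
    apply (@is_series_scal_l R_AbsRing R_NormedModule K (fun n => scal (pow_n (C*Rabs r) n) (/ INR (fact n))) (exp (C * Rabs r))). apply is_exp_Reals.
Qed.
End Evol.


Lemma radius_inf (a : nat -> R) : (forall r, CV_disk a r) -> forall x, Rbar_lt (Rabs x) (CV_radius a).
Proof.
  intros H x. unfold CV_radius. destruct (Lub_Rbar_correct (CV_disk a)) as [Hub _].
  specialize (Hub (Rabs x + 1) (H _)).
  destruct (Lub_Rbar (CV_disk a)); simpl in *; auto; lra.
Qed.

Lemma Series_fsum {X} (l : list X) (g : X -> nat -> R) :
  (forall x, In x l -> ex_series (g x)) ->
  ex_series (fun k => fsum l (fun x => g x k)) /\
  Series (fun k => fsum l (fun x => g x k)) = fsum l (fun x => Series (g x)).
Proof.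
  induction l; simpl; intros H.
  - assert (Z : is_series (fun _ : nat => 0) 0).
    { apply is_series_Reals. intros e He. exists 0%nat. intros n _. unfold R_dist. rewrite sum_cte. rewrite Rmult_0_l, Rminus_0_r, Rabs_R0. auto. }
    split. exists 0. exact Z. apply is_series_unique. exact Z.
  - destruct IHl as [H1 H2]. intros; auto.
    split. apply (ex_series_plus (V := R_NormedModule)); auto.
    rewrite Series_plus; auto. rewrite H2; auto.
Qed.

Section Evol2.
Context {X : Type} (s : list X) (v : X -> R) (A : X -> X -> R).

Lemma coef_ex y t : ex_series (fun k => coef s v A y k * t ^ k).
Proof. apply ex_series_Rabs. apply coef_disk. Qed.

Lemma evol_PSeries t y : evol s v A t y = PSeries (coef s v A y) t.
Proof.
  unfold evol. pose proof (Series_correct _ (coef_ex y t)) as Hs.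
  assert (Hi : infinite_sum (fun k => t ^ k / INR (fact k) * vpow s v A k y) (PSeries (coef s v A y) t)).
  { apply is_series_Reals. eapply is_series_ext; [|exact Hs]. intros n. unfold coef. simpl. unfold Rdiv. ring. }
  pose proof (epsilon_spec (inhabits 0) (fun l => infinite_sum (fun k => t ^ k / INR (fact k) * vpow s v A k y) l) (ex_intro _ _ Hi)) as He.
  eapply uniqueness_sum; eauto.
Qed.

Lemma evol_0 y : evol s v A 0 y = v y.
Proof. rewrite evol_PSeries, PSeries_0. unfold coef. simpl. field. Qed.

Lemma evol_derive t y :
  is_derive (fun t => evol s v A t y) t (fsum s (fun x => evol s v A t x * A x y)).
Proof.
  apply (is_derive_ext (PSeries (coef s v A y))). intros u. symmetry. apply evol_PSeries.
  replace (fsum s (fun x => evol s v A t x * A x y)) with (PSeries (PS_derive (coef s v A y)) t).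
  apply is_derive_PSeries. apply radius_inf. apply coef_disk.
  unfold PSeries.
  rewrite (Series_ext _ (fun k => fsum s (fun x => coef s v A x k * t ^ k * A x y))).
  - destruct (Series_fsum s (fun x k => coef s v A x k * t ^ k * A x y)) as [_ ->].
    + intros x _. apply ex_series_scal_r. apply coef_ex.
    + apply fsum_ext. intros x _. rewrite Series_scal_r. rewrite evol_PSeries. reflexivity.
  - intros k. unfold PS_derive, coef. rewrite vpow_S.
    assert (INR (fact k) <> 0) by (apply not_0_INR, fact_neq_0).
    assert (INR (S k) <> 0) by (apply not_0_INR; lia).
    transitivity (fsum s (fun x => vpow s v A k x * A x y) * (t^k / INR (fact k))).
    + rewrite fact_simpl, mult_INR. field. split; auto.
    + rewrite <- fsum_scal_r. apply fsum_ext. intros; field; auto.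
Qed.
End Evol2.


Lemma is_derive_rw (f : R -> R) x l l' : l = l' -> is_derive f x l -> is_derive f x l'.
Proof. intros ->; auto. Qed.

Lemma is_derive_cont (f : R -> R) x l : is_derive f x l -> continuity_pt f x.
Proof. intros H. apply continuity_pt_filterlim. apply (ex_derive_continuous (K := R_AbsRing) (V := R_NormedModule)). exists l; auto. Qed.

Lemma is_derive_expc c t : is_derive (fun t => exp (c * t)) t (c * exp (c * t)).
Proof.
  assert (Hc : is_derive (fun t : R => c * t) t c).
  { pose proof (is_derive_scal (fun t => t) t c 1 (is_derive_id (K := R_AbsRing) t)) as H. rewrite Rmult_1_r in H. exact H. }
  apply (is_derive_comp exp (fun t => c * t) t (exp (c * t)) c).
  apply is_derive_exp. exact Hc.
Qed.

Lemma deriv_nonincr (f f' : R -> R) a b :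
  (forall t, is_derive f t (f' t)) -> (forall t, a <= t <= b -> f' t <= 0) -> a <= b -> f b <= f a.
Proof.
  intros Hd Hn Hab. destruct (MVT_gen f a b f') as (c & Hc & Heq).
  - intros; auto.
  - intros; eapply is_derive_cont; eauto.
  - rewrite Rmin_left, Rmax_right in Hc by lra.
    specialize (Hn c Hc). assert (f' c * (b - a) <= 0) by nra. lra.
Qed.

Lemma gronwall (W W' : R -> R) c :
  (forall t, is_derive W t (W' t)) -> (forall t, W' t <= - c * W t) ->
  forall t, 0 <= t -> W t <= exp (- c * t) * W 0.
Proof.
  intros Hd Hn t Ht.
  assert (H : exp (c * t) * W t <= exp (c * 0) * W 0).
  { apply (deriv_nonincr (fun t => exp (c * t) * W t) (fun t => c * exp (c * t) * W t + exp (c * t) * W' t)); auto.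
    - intros u. apply (Derive.is_derive_mult (fun t => exp (c*t)) W u); auto. apply is_derive_expc.
    - intros u _. specialize (Hn u). pose proof (exp_pos (c * u)). nra. }
  rewrite Rmult_0_r, exp_0, Rmult_1_l in H.
  replace (W t) with (exp (- c * t) * (exp (c * t) * W t)).
  apply Rmult_le_compat_l. left; apply exp_pos. auto.
  rewrite <- Rmult_assoc, <- exp_plus. replace (- c * t + c * t) with 0 by ring. rewrite exp_0; ring.
Qed.

Lemma fsum_one {X} (s : list X) : fsum s (fun _ => 1) = INR (length s).
Proof. induction s; simpl; auto. rewrite IHs. destruct (length s); simpl; lra. Qed.
Lemma fsum_const {X} (s : list X) c : fsum s (fun _ => c) = c * INR (length s).
Proof. rewrite <- fsum_one, <- fsum_scal. apply fsum_ext; intros; ring. Qed.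

Lemma sq_abs_bound a b : Rabs a * Rabs b <= (a ^ 2 + b ^ 2) / 2.
Proof. assert (a ^ 2 = Rabs a ^ 2) by (symmetry; apply pow2_abs).
  assert (b ^ 2 = Rabs b ^ 2) by (symmetry; apply pow2_abs).
  rewrite H, H0. pose proof (pow2_ge_0 (Rabs a - Rabs b)). simpl in *. lra. Qed.

Lemma ode_unique {X} (s : list X) (A : X -> X -> R) (f g : R -> X -> R) :
  (forall t y, In y s -> is_derive (fun t => f t y) t (fsum s (fun x => f t x * A x y))) ->
  (forall t y, In y s -> is_derive (fun t => g t y) t (fsum s (fun x => g t x * A x y))) ->
  (forall y, In y s -> f 0 y = g 0 y) ->
  forall t y, 0 <= t -> In y s -> f t y = g t y.
Proof.
  intros Hf Hg H0 t y Ht Hy.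
  set (h t y := f t y - g t y).
  set (N t := fsum s (fun y => h t y ^ 2)).
  set (Am := fsum s (fun x => fsum s (fun y => Rabs (A x y)))).
  set (n := INR (length s)).
  assert (HAm : forall x y, In x s -> In y s -> Rabs (A x y) <= Am).
  { intros x y0 Hx Hy0. unfold Am. apply Rle_trans with (fsum s (fun y => Rabs (A x y))).
    - apply (fsum_ge_mem s (fun y => Rabs (A x y))); auto; intros; apply Rabs_pos.
    - apply (fsum_ge_mem s (fun x => fsum s (fun y => Rabs (A x y)))); auto. intros; apply fsum_nonneg; intros; apply Rabs_pos. }
  assert (HAm0 : 0 <= Am) by (apply fsum_nonneg; intros; apply fsum_nonneg; intros; apply Rabs_pos).
  assert (Hlen : fsum s (fun _ => 1) = n) by apply fsum_one.
  assert (Hd : forall t y, In y s -> is_derive (fun t => h t y) t (fsum s (fun x => h t x * A x y))).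
  { intros u y0 Hy0. unfold h. apply (is_derive_rw _ _ (fsum s (fun x => f u x * A x y0) - fsum s (fun x => g u x * A x y0))).
    rewrite <- fsum_minus. apply fsum_ext; intros; ring.
    apply (is_derive_minus (K := R_AbsRing) (V := R_NormedModule) (fun t => f t y0) (fun t => g t y0)); auto. }
  assert (HN : forall t, is_derive N t (fsum s (fun y => 2 * h t y * fsum s (fun x => h t x * A x y)))).
  { intros u. unfold N. apply is_derive_fsum. intros y0 Hy0.
    apply (is_derive_rw _ _ (INR 2 * fsum s (fun x => h u x * A x y0) * h u y0 ^ Init.Nat.pred 2)).
    simpl; ring. apply (is_derive_pow (fun t => h t y0)). auto. }
  set (K := 2 * Am * n).
  assert (HK : forall t, fsum s (fun y => 2 * h t y * fsum s (fun x => h t x * A x y)) <= K * N t).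
  { intros u.
    apply Rle_trans with (fsum s (fun y => fsum s (fun x => 2 * Am * ((h u x ^ 2 + h u y ^ 2) / 2)))).
    - apply fsum_le. intros y0 Hy0. rewrite <- fsum_scal. apply fsum_le. intros x Hx.
      eapply Rle_trans. apply Rle_abs.
      rewrite !Rabs_mult. rewrite (Rabs_right 2) by lra.
      pose proof (HAm x y0 Hx Hy0). pose proof (sq_abs_bound (h u x) (h u y0)).
      pose proof (Rabs_pos (h u x)). pose proof (Rabs_pos (h u y0)). pose proof (Rabs_pos (A x y0)).
      assert (Rabs (h u y0) * Rabs (h u x) * Rabs (A x y0) <= Rabs (h u y0) * Rabs (h u x) * Am).
      { apply Rmult_le_compat_l; auto. apply Rmult_le_pos; auto. }
      nra.
    - apply Req_le. 
      transitivity (fsum s (fun y => Am * fsum s (fun x => h u x ^ 2) + Am * (n * h u y ^ 2))).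
      + apply fsum_ext. intros y0 _. rewrite <- fsum_scal, <- Hlen, <- fsum_scal_r, <- fsum_scal, <- fsum_plus.
        apply fsum_ext. intros; field.
      + rewrite fsum_plus, fsum_const.
        rewrite (fsum_ext s (fun y => Am * (n * h u y ^2)) (fun y => (Am*n) * h u y ^2)) by (intros; ring).
        rewrite fsum_scal. unfold K, N, n. ring. }
  assert (HNt : N t <= exp (- - K * t) * N 0).
  { apply (gronwall N (fun t => fsum s (fun y => 2 * h t y * fsum s (fun x => h t x * A x y))) (-K)); auto. intros u. specialize (HK u). lra. }
  assert (HN0 : N 0 = 0).
  { unfold N. transitivity (fsum s (fun _ => 0)); [|apply fsum_zero]. apply fsum_ext. intros y0 Hy0. unfold h. rewrite H0; auto. ring. }
  rewrite HN0, Rmult_0_r in HNt.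
  assert (Hpos : forall y, In y s -> 0 <= h t y ^ 2) by (intros; apply pow2_ge_0).
  assert (Hz : N t = 0) by (pose proof (fsum_nonneg s _ Hpos); unfold N in *; lra).
  pose proof (fsum_zero_inv s _ Hpos Hz y Hy). unfold h in H.
  assert (f t y - g t y = 0) by nra. lra.
Qed.


Lemma deriv_zero_const (f : R -> R) a b : (forall t, is_derive f t 0) -> f a = f b.
Proof.
  intros H.
  assert (forall a b, a <= b -> f b <= f a).
  { intros a0 b0 Hab. apply (deriv_nonincr f (fun _ => 0)); auto. intros; lra. }
  assert (forall a b, a <= b -> - f b <= - f a).
  { intros a0 b0 Hab. apply (deriv_nonincr (fun t => - f t) (fun _ => 0)); auto.
    intros t. apply (is_derive_rw _ _ (opp 0)). unfold opp; simpl. unfold opp; simpl. ring.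
    apply (is_derive_opp (K := R_AbsRing) (V := R_NormedModule)). auto. intros; lra. }
  destruct (Rle_dec a b). specialize (H0 a b r); specialize (H1 a b r); lra.
  specialize (H0 b a ltac:(lra)); specialize (H1 b a ltac:(lra)); lra.
Qed.

Lemma finite_bound {X} (l : list X) (P : X -> R -> Prop) :
  (forall x K K', P x K -> K <= K' -> P x K') ->
  (forall x, In x l -> exists K, P x K) -> exists K, forall x, In x l -> P x K.
Proof.
  intros Hm. induction l; simpl; intros H.
  - exists 0. tauto.
  - destruct IHl as [K1 HK1]. intros; auto.
    destruct (H a (or_introl eq_refl)) as [K0 HK0].
    exists (Rmax K0 K1). intros x [<-|Hx].
    + eapply Hm; eauto. apply Rmax_l.
    + eapply Hm; eauto. apply Rmax_r.
Qed.

Section Chain.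
Context {X : Type} (s : list X) (mu : X -> R) (L : X -> X -> R) (pi : X -> R).
Hypothesis Hc : finite_chain s mu L pi.

Definition Edir (u : X -> R) := fsum s (fun x => fsum s (fun y => pi x * L x y * (u y - u x) ^ 2)).

Lemma pi_nonneg : forall x, In x s -> 0 <= pi x.
Proof. destruct Hc as (_ & _ & _ & _ & _ & (Hd & _) & _). apply Hd. Qed.

Lemma L_offdiag : forall x y, In x s -> In y s -> x <> y -> 0 <= L x y.
Proof. destruct Hc as (_ & _ & _ & (Hg & _) & _). apply Hg. Qed.

Lemma L_rows : forall x, In x s -> fsum s (fun y => L x y) = 0.
Proof. destruct Hc as (_ & _ & _ & (_ & Hg) & _). apply Hg. Qed.

Lemma pi_stat : forall y, In y s -> fsum s (fun x => pi x * L x y) = 0.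
Proof. destruct Hc as (_ & _ & _ & _ & _ & (_ & Hs)). apply Hs. Qed.

Lemma pi_sum : fsum s pi = 1.
Proof. destruct Hc as (_ & _ & _ & _ & _ & ((_ & H) & _)). apply H. Qed.

Lemma mu_sum : fsum s mu = 1.
Proof. destruct Hc as (_ & _ & (_ & H) & _). apply H. Qed.

Lemma term_nonneg u : forall x y, In x s -> In y s -> 0 <= pi x * L x y * (u y - u x) ^ 2.
Proof. intros x y Hx Hy. destruct (classic (x = y)) as [<-|Hne].
  - replace (u x - u x) with 0 by ring. simpl; lra.
  - apply Rmult_le_pos. apply Rmult_le_pos. apply pi_nonneg; auto. apply L_offdiag; auto. apply pow2_ge_0.
Qed.

Lemma Edir_nonneg u : 0 <= Edir u.
Proof. apply fsum_nonneg. intros. apply fsum_nonneg. intros. apply term_nonneg; auto. Qed.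

Lemma Edir_ge u x y : In x s -> In y s -> pi x * L x y * (u y - u x) ^ 2 <= Edir u.
Proof. intros Hx Hy. unfold Edir.
  apply Rle_trans with (fsum s (fun y => pi x * L x y * (u y - u x) ^ 2)).
  - apply (fsum_ge_mem s (fun y => pi x * L x y * (u y - u x) ^ 2)); auto. intros; apply term_nonneg; auto.
  - apply (fsum_ge_mem s (fun x => fsum s (fun y => pi x * L x y * (u y - u x) ^ 2))); auto.
    intros; apply fsum_nonneg; intros; apply term_nonneg; auto.
Qed.

Lemma pi_pos : forall y, In y s -> 0 < pi y.
Proof.
  assert (Hr : forall x y, reach s L x y -> In x s -> pi y = 0 -> pi x = 0).
  { induction 1 as [x|x z y Hz Hxz Hzy IH]; intros Hx Hy; auto.
    specialize (IH Hz Hy).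
    assert (Hn : forall w, In w s -> 0 <= pi w * L w z).
    { intros w Hw. destruct (classic (w = z)) as [->|Hne]. rewrite IH; lra.
      apply Rmult_le_pos. apply pi_nonneg; auto. apply L_offdiag; auto. }
    pose proof (fsum_zero_inv s _ Hn (pi_stat z Hz) x Hx).
    destruct (Rmult_integral _ _ H); auto. lra. }
  intros y Hy. destruct (Rle_lt_or_eq_dec 0 (pi y) (pi_nonneg y Hy)) as [|He]; auto.
  exfalso. destruct Hc as (_ & _ & _ & _ & Hirr & _).
  assert (fsum s pi = 0).
  { transitivity (fsum s (fun _ => 0)); [|apply fsum_zero]. apply fsum_ext. intros x Hx.
    apply (Hr x y); auto. }
  rewrite pi_sum in H. lra.
Qed.

Lemma reach_bound : forall x y, reach s L x y -> In x s ->
  exists K, 0 <= K /\ forall u, (u y - u x) ^ 2 <= K * Edir u.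
Proof.
  induction 1 as [x|x z y Hz Hxz Hzy IH]; intros Hx.
  - exists 0. split. lra. intros u. replace (u x - u x) with 0 by ring. pose proof (Edir_nonneg u). simpl; lra.
  - destruct (IH Hz) as (K & HK & Hb).
    pose proof (pi_pos x Hx) as Hpx.
    set (K0 := / (pi x * L x z)).
    assert (HK0 : 0 < K0) by (apply Rinv_0_lt_compat, Rmult_lt_0_compat; auto).
    exists (2 * K0 + 2 * K). split. lra. intros u.
    assert (Hedge : (u z - u x) ^ 2 <= K0 * Edir u).
    { pose proof (Edir_ge u x z Hx Hz).
      unfold K0. apply (Rmult_le_reg_l (pi x * L x z)). apply Rmult_lt_0_compat; auto.
      rewrite <- Rmult_assoc, Rinv_r. lra. apply Rgt_not_eq, Rmult_lt_0_compat; auto. }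
    specialize (Hb u).
    assert ((u y - u x) ^ 2 <= 2 * (u z - u x) ^ 2 + 2 * (u y - u z) ^ 2).
    { pose proof (pow2_ge_0 ((u z - u x) - (u y - u z))). simpl in *. nra. }
    lra.
Qed.

Lemma var_identity u :
  fsum s (fun x => fsum s (fun y => pi x * pi y * (u x - u y) ^ 2)) =
  2 * fsum s (fun x => pi x * u x ^ 2) * fsum s pi - 2 * (fsum s (fun x => pi x * u x)) ^ 2.
Proof.
  set (P := fsum s pi). set (S1 := fsum s (fun x => pi x * u x)). set (S2 := fsum s (fun x => pi x * u x ^ 2)).
  transitivity (fsum s (fun x => P * (pi x * u x ^ 2) + (-2 * S1) * (pi x * u x) + S2 * pi x)).
  - apply fsum_ext. intros x _.
    transitivity (fsum s (fun y => (pi x * u x ^ 2) * pi y + (-2 * pi x * u x) * (pi y * u y) + pi x * (pi y * u y ^ 2))).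
    + apply fsum_ext; intros; ring.
    + rewrite !fsum_plus, !fsum_scal. fold P S1 S2. ring.
  - rewrite !fsum_plus, !fsum_scal. fold P S1 S2. ring.
Qed.

Lemma gap : exists K, 0 < K /\ forall u,
  fsum s (fun x => pi x * u x ^ 2) - (fsum s (fun x => pi x * u x)) ^ 2 <= K * Edir u.
Proof.
  destruct Hc as (_ & _ & _ & _ & Hirr & _).
  destruct (finite_bound s (fun x K => forall y, In y s -> forall u, (u y - u x) ^ 2 <= K * Edir u)) as [K HK].
  - intros x K K' H HKK' y Hy u. specialize (H y Hy u). pose proof (Edir_nonneg u).
    apply Rle_trans with (K * Edir u); auto. apply Rmult_le_compat_r; auto.
  - intros x Hx.
    apply (finite_bound s (fun y K => forall u, (u y - u x) ^ 2 <= K * Edir u)).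
    + intros y K K' H HKK' u. specialize (H u). pose proof (Edir_nonneg u).
      apply Rle_trans with (K * Edir u); auto. apply Rmult_le_compat_r; auto.
    + intros y Hy. destruct (reach_bound x y (Hirr x y Hx Hy) Hx) as (K & _ & HK). eauto.
  - exists (Rabs K + 1). split. pose proof (Rabs_pos K); lra.
    intros u. pose proof (var_identity u) as Hv. rewrite pi_sum in Hv.
    assert (fsum s (fun x => fsum s (fun y => pi x * pi y * (u x - u y) ^ 2)) <= 2 * ((Rabs K + 1) * Edir u)).
    { apply Rle_trans with (fsum s (fun x => fsum s (fun y => pi x * pi y * ((Rabs K + 1) * Edir u)))).
      - apply fsum_le; intros x Hx; apply fsum_le; intros y Hy.
        apply Rmult_le_compat_l. apply Rmult_le_pos; apply pi_nonneg; auto.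
        replace ((u x - u y) ^ 2) with ((u y - u x) ^ 2) by ring.
        pose proof (HK y Hy x Hx u). pose proof (Edir_nonneg u). pose proof (Rle_abs K).
        apply Rle_trans with (K * Edir u); auto. apply Rmult_le_compat_r; lra.
      - rewrite (fsum_ext s _ (fun x => pi x * ((Rabs K + 1) * Edir u))).
        rewrite fsum_scal_r, pi_sum. pose proof (Edir_nonneg u). pose proof (Rabs_pos K). nra.
        intros x _. rewrite (fsum_ext s _ (fun y => pi y * (pi x * ((Rabs K + 1) * Edir u)))).
        rewrite fsum_scal_r, pi_sum. ring. intros; ring. }
    lra.
Qed.

Lemma dirichlet u :
  fsum s (fun y => u y * fsum s (fun x => pi x * u x * L x y)) = - Edir u / 2.
Proof.
  assert (T1 : fsum s (fun x => fsum s (fun y => pi x * L x y * u y ^ 2)) = 0).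
  { rewrite fsum_swap. transitivity (fsum s (fun (y : X) => 0)); [|apply fsum_zero].
    apply fsum_ext. intros y Hy. rewrite fsum_scal_r, pi_stat; auto; ring. }
  assert (T3 : fsum s (fun x => fsum s (fun y => (pi x * u x ^ 2) * L x y)) = 0).
  { transitivity (fsum s (fun (y : X) => 0)); [|apply fsum_zero].
    apply fsum_ext. intros x Hx. rewrite fsum_scal, L_rows; auto; ring. }
  assert (T2 : fsum s (fun y => u y * fsum s (fun x => pi x * u x * L x y)) =
               fsum s (fun x => fsum s (fun y => pi x * L x y * u x * u y))).
  { rewrite fsum_swap. apply fsum_ext. intros y _. rewrite <- fsum_scal. apply fsum_ext; intros; ring. }
  unfold Edir.
  transitivity (- (fsum s (fun x => fsum s (fun y => pi x * L x y * u y ^ 2)) +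
     -2 * fsum s (fun x => fsum s (fun y => pi x * L x y * u x * u y)) +
     fsum s (fun x => fsum s (fun y => (pi x * u x ^ 2) * L x y))) / 2).
  - rewrite T1, T3, T2. field.
  - f_equal. f_equal. rewrite <- fsum_scal, <- !fsum_plus. apply fsum_ext. intros x _.
    rewrite <- fsum_scal, <- !fsum_plus. apply fsum_ext. intros; ring.
Qed.

Definition Wc t := fsum s (fun y => Rabs (evol s mu L t y / pi y - 1) ^ 2 * pi y).

Lemma mass t : fsum s (fun y => evol s mu L t y) = 1.
Proof.
  rewrite <- mu_sum. transitivity (fsum s (fun y => evol s mu L 0 y)).
  - apply (deriv_zero_const (fun t => fsum s (fun y => evol s mu L t y))).
    intros u. apply (is_derive_rw _ _ (fsum s (fun y => fsum s (fun x => evol s mu L u x * L x y)))).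
    rewrite fsum_swap. transitivity (fsum s (fun (x : X) => 0)); [|apply fsum_zero].
    apply fsum_ext. intros x Hx. rewrite fsum_scal, L_rows; auto; ring.
    apply is_derive_fsum. intros y _. apply evol_derive.
  - apply fsum_ext. intros; apply evol_0.
Qed.

Lemma Wc_eq t : Wc t = fsum s (fun y => evol s mu L t y ^ 2 / pi y) - 1.
Proof.
  unfold Wc.
  transitivity (fsum s (fun y => evol s mu L t y ^ 2 / pi y) - 2 * fsum s (fun y => evol s mu L t y) + fsum s pi).
  - rewrite <- fsum_scal, <- fsum_minus, <- fsum_plus. apply fsum_ext. intros y Hy.
    rewrite pow2_abs. pose proof (pi_pos y Hy). field. lra.
  - rewrite mass, pi_sum. ring.
Qed.

Lemma Wc_nonneg t : 0 <= Wc t.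
Proof. apply fsum_nonneg. intros y Hy. apply Rmult_le_pos. apply pow2_ge_0. apply pi_nonneg; auto. Qed.

Definition Wd t := fsum s (fun y => / pi y * (INR 2 * fsum s (fun x => evol s mu L t x * L x y) * evol s mu L t y ^ 1)).

Lemma Wc_derive t : is_derive Wc t (Wd t).
Proof.
  apply (is_derive_ext (fun t => fsum s (fun y => / pi y * evol s mu L t y ^ 2) - 1)).
  { intros u. rewrite Wc_eq. f_equal. apply fsum_ext. intros. unfold Rdiv. ring. }
  apply (is_derive_rw _ _ (minus (Wd t) 0)). unfold minus, plus, opp; simpl. ring.
  apply (is_derive_minus (K := R_AbsRing) (V := R_NormedModule)).
  - apply is_derive_fsum. intros y _. apply is_derive_scal. apply (is_derive_pow (fun t => evol s mu L t y)).
    apply evol_derive.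
  - apply (is_derive_const (K := R_AbsRing) (V := R_NormedModule) 1 t).
Qed.

Lemma Wc_decay : exists c, 0 < c /\ forall t, Wd t <= - c * Wc t.
Proof.
  destruct gap as (K & HK & Hg). exists (/ K). split. apply Rinv_0_lt_compat; auto.
  intros t. set (u y := evol s mu L t y / pi y).
  specialize (Hg u).
  assert (H1 : fsum s (fun x => pi x * u x) = 1).
  { rewrite <- (mass t). apply fsum_ext. intros x Hx. unfold u. pose proof (pi_pos x Hx). field. lra. }
  assert (H2 : fsum s (fun x => pi x * u x ^ 2) = Wc t + 1).
  { rewrite Wc_eq. ring_simplify. apply fsum_ext. intros x Hx. unfold u. pose proof (pi_pos x Hx). field. lra. }
  assert (H3 : Wd t = - Edir u).
  { transitivity (2 * fsum s (fun y => u y * fsum s (fun x => pi x * u x * L x y))).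
    - unfold Wd. rewrite <- fsum_scal. apply fsum_ext. intros y Hy.
      rewrite (fsum_ext s (fun x => pi x * u x * L x y) (fun x => evol s mu L t x * L x y)).
      unfold u. simpl. pose proof (pi_pos y Hy). field. lra.
      intros x Hx. unfold u. pose proof (pi_pos x Hx). field. lra.
    - rewrite dirichlet. field. }
  rewrite H1, H2 in Hg. rewrite H3.
  assert (Wc t <= K * Edir u) by lra.
  assert (/ K * Wc t <= Edir u).
  { apply Rle_trans with (/ K * (K * Edir u)). apply Rmult_le_compat_l; auto. left; apply Rinv_0_lt_compat; auto.
    rewrite <- Rmult_assoc, Rinv_l by lra. lra. }
  lra.
Qed.

End Chain.


Lemma fprod_seq_S n g : fprod (seq 0 (S n)) g = g 0%nat * fprod (seq 0 n) (fun i => g (S i)).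
Proof. simpl. rewrite <- seq_shift, fprod_map. reflexivity. Qed.
Lemma fsum_seq_S n g : fsum (seq 0 (S n)) g = g 0%nat + fsum (seq 0 n) (fun i => g (S i)).
Proof. simpl. rewrite <- seq_shift, fsum_map. reflexivity. Qed.


Lemma PE_cons a ms x : In x (prod_enum (a :: ms)) ->
  exists k x', x = k :: x' /\ (k < a)%nat /\ In x' (prod_enum ms).
Proof. simpl. intros H. apply in_flat_map in H as (k & Hk & H). apply in_map_iff in H as (x' & <- & Hx').
  apply in_seq in Hk. exists k, x'. repeat split; auto; lia. Qed.

Lemma PE_len ms x : In x (prod_enum ms) -> length x = length ms.
Proof. revert x; induction ms; intros x H.
  - simpl in H. destruct H as [<-|[]]; auto.
  - destruct (PE_cons _ _ _ H) as (k & x' & -> & _ & Hx'). simpl; f_equal; auto. Qed.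

Lemma fsum_PE_cons a ms (F : list nat -> R) :
  fsum (prod_enum (a :: ms)) F = fsum (seq 0 a) (fun k => fsum (prod_enum ms) (fun x => F (k :: x))).
Proof. simpl. rewrite fsum_flat_map. apply fsum_ext. intros. rewrite fsum_map. reflexivity. Qed.

Lemma PE_sum_prod ms (f : nat -> nat -> R) :
  fsum (prod_enum ms) (fun x => fprod (seq 0 (length ms)) (fun i => f i (nth i x 0%nat))) =
  fprod (seq 0 (length ms)) (fun i => fsum (seq 0 (nth i ms 0%nat)) (f i)).
Proof.
  revert f; induction ms; intros f.
  - simpl. lra.
  - rewrite fsum_PE_cons. simpl length. rewrite fprod_seq_S. simpl nth.
    rewrite <- (IHms (fun i => f (S i))). rewrite <- fsum_scal_r. apply fsum_ext. intros k _.
    rewrite <- fsum_scal. apply fsum_ext. intros x _. rewrite fprod_seq_S. reflexivity.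
Qed.

Lemma PE_delta ms (G : list nat -> R) x0 : In x0 (prod_enum ms) ->
  fsum (prod_enum ms) (fun x => G x * fprod (seq 0 (length ms))
     (fun j => if Nat.eqb (nth j x 0%nat) (nth j x0 0%nat) then 1 else 0)) = G x0.
Proof.
  revert G x0; induction ms; intros G x0 Hx0.
  - simpl in *. destruct Hx0 as [<-|[]]. simpl. lra.
  - destruct (PE_cons _ _ _ Hx0) as (k0 & x1 & -> & Hk0 & Hx1).
    rewrite fsum_PE_cons. simpl length.
    transitivity (fsum (seq 0 a) (fun k => if Nat.eqb k k0 then
        fsum (prod_enum ms) (fun x => G (k :: x) * fprod (seq 0 (length ms))
          (fun j => if Nat.eqb (nth j x 0%nat) (nth j x1 0%nat) then 1 else 0)) else 0)).
    + apply fsum_ext. intros k _. destruct (Nat.eqb_spec k k0).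
      * apply fsum_ext. intros x _. rewrite fprod_seq_S. simpl nth. subst. rewrite Nat.eqb_refl. ring.
      * transitivity (fsum (prod_enum ms) (fun _ => 0)); [|apply fsum_zero].
        apply fsum_ext. intros x _. rewrite fprod_seq_S. simpl nth.
        destruct (Nat.eqb_spec k k0); [lia|]. ring.
    + rewrite fsum_delta. apply (IHms (fun x => G (k0 :: x)) x1 Hx1). apply seq_NoDup. apply in_seq; lia.
Qed.

Fixpoint upd (x : list nat) (i k : nat) : list nat :=
  match x, i with
  | [], _ => []
  | a :: x', O => k :: x'
  | a :: x', S i' => a :: upd x' i' k
  end.

Lemma nth_upd x i k j : (i < length x)%nat ->
  nth j (upd x i k) 0%nat = if Nat.eqb j i then k else nth j x 0%nat.
Proof. revert i j; induction x; intros i j Hi; simpl in Hi; [lia|].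
  destruct i, j; simpl; auto. apply IHx; lia. Qed.

Lemma PE_reduce ms x i (F : list nat -> R) : In x (prod_enum ms) -> (i < length ms)%nat ->
  fsum (prod_enum ms) (fun x' => F x' * fprod (seq 0 (length ms))
     (fun j => if Nat.eqb j i then 1 else if Nat.eqb (nth j x' 0%nat) (nth j x 0%nat) then 1 else 0)) =
  fsum (seq 0 (nth i ms 0%nat)) (fun k => F (upd x i k)).
Proof.
  revert x i F; induction ms; intros x i F Hx Hi; simpl in Hi; [lia|].
  destruct (PE_cons _ _ _ Hx) as (k0 & x0 & -> & Hk0 & Hx0).
  rewrite fsum_PE_cons. simpl length. destruct i as [|i'].
  - simpl nth. simpl upd. apply fsum_ext. intros k _.
    rewrite <- (PE_delta ms (fun x => F (k :: x)) x0 Hx0).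
    apply fsum_ext. intros x _. rewrite fprod_seq_S. simpl. ring_simplify. reflexivity.
  - simpl nth. simpl upd.
    transitivity (fsum (seq 0 a) (fun k => if Nat.eqb k k0 then
        fsum (prod_enum ms) (fun x' => F (k :: x') * fprod (seq 0 (length ms))
          (fun j => if Nat.eqb j i' then 1 else if Nat.eqb (nth j x' 0%nat) (nth j x0 0%nat) then 1 else 0)) else 0)).
    + apply fsum_ext. intros k _. destruct (Nat.eqb_spec k k0).
      * apply fsum_ext. intros x' _. rewrite fprod_seq_S. simpl nth. subst. rewrite Nat.eqb_refl. simpl. ring.
      * transitivity (fsum (prod_enum ms) (fun _ => 0)); [|apply fsum_zero].
        apply fsum_ext. intros x' _. rewrite fprod_seq_S. simpl nth. simpl.
        destruct (Nat.eqb_spec k k0); [lia|]. ring.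
    + rewrite fsum_delta. apply (IHms x0 i' (fun x' => F (k0 :: x'))); auto; lia.
      apply seq_NoDup. apply in_seq; lia.
Qed.


Section Prod.
Variables (ell : nat -> nat) (m : nat -> nat -> nat)
  (mu pi : nat -> nat -> nat -> R) (L : nat -> nat -> nat -> nat -> R)
  (p : nat -> nat -> R) (n : nat).

Let ms := map (m n) (seq 0 (ell n)).

Lemma ms_len : length ms = ell n.
Proof. unfold ms. rewrite length_map, length_seq. auto. Qed.

Lemma ms_nth i : (i < ell n)%nat -> nth i ms 0%nat = m n i.
Proof. intros Hi. unfold ms. rewrite nth_indep with (d' := m n 0%nat).
  rewrite map_nth, seq_nth; auto. rewrite length_map, length_seq; auto. Qed.

Definition Ecomp i tau k := evol (seq 0 (m n i)) (mu n i) (L n i) tau k.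
Definition gprod t y := fprod (seq 0 (ell n)) (fun i => Ecomp i (p n i * t) (nth i y 0%nat)).

Lemma in_PS_len y : In y (prod_space ell m n) -> length y = ell n.
Proof. intros H. apply PE_len in H. rewrite H. apply ms_len. Qed.

Lemma gprod_derive t y : In y (prod_space ell m n) ->
  is_derive (fun t => gprod t y) t (fsum (prod_space ell m n) (fun x => gprod t x * prod_gen ell p L n x y)).
Proof.
  intros Hy.
  set (f' i := p n i * fsum (seq 0 (m n i)) (fun k => Ecomp i (p n i * t) k * L n i k (nth i y 0%nat))).
  set (Rest i := fprod (seq 0 (ell n)) (fun j => if Nat.eqb j i then 1 else Ecomp j (p n j * t) (nth j y 0%nat))).
  apply (is_derive_rw _ _ (fsum (seq 0 (ell n)) (fun i => f' i * Rest i))).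
  2:{ unfold gprod. apply (is_derive_fprod (seq 0 (ell n)) (fun i t => Ecomp i (p n i * t) (nth i y 0%nat))).
      apply seq_NoDup. intros i _.
      assert (Hl : is_derive (fun t : R => p n i * t) t (p n i)).
      { pose proof (is_derive_scal (fun t => t) t (p n i) 1 (is_derive_id (K := R_AbsRing) t)) as H. rewrite Rmult_1_r in H. exact H. }
      apply (is_derive_comp (fun tau => Ecomp i tau (nth i y 0%nat)) (fun t => p n i * t) t _ (p n i)); auto.
      unfold Ecomp. apply evol_derive. }
  symmetry.
  unfold prod_gen.
  transitivity (fsum (prod_space ell m n) (fun x => fsum (seq 0 (ell n)) (fun i =>
     (p n i * gprod t x * L n i (nth i x 0%nat) (nth i y 0%nat)) *
     fprod (seq 0 (ell n)) (fun j => if Nat.eqb j i then 1 else if Nat.eqb (nth j x 0%nat) (nth j y 0%nat) then 1 else 0)))).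
  { apply fsum_ext. intros x _. rewrite <- fsum_scal. apply fsum_ext. intros; ring. }
  rewrite fsum_swap. apply fsum_ext. intros i Hi. apply in_seq in Hi.
  assert (HR := PE_reduce ms y i (fun x => p n i * gprod t x * L n i (nth i x 0%nat) (nth i y 0%nat)) Hy ltac:(rewrite ms_len; lia)).
  rewrite ms_len, ms_nth in HR by lia.
  unfold prod_space. change (map (m n) (seq 0 (ell n))) with ms. rewrite HR.
  assert (Hyl : length y = ell n) by (apply in_PS_len; auto).
  transitivity (fsum (seq 0 (m n i)) (fun k => (p n i * (Ecomp i (p n i * t) k * L n i k (nth i y 0%nat))) * Rest i)).
  - apply fsum_ext. intros k _. rewrite nth_upd by lia. rewrite Nat.eqb_refl.
    unfold gprod. rewrite (fprod_pick _ _ i) by (apply seq_NoDup || (apply in_seq; lia)).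
    rewrite nth_upd, Nat.eqb_refl by lia. unfold Rest.
    rewrite (fprod_ext (seq 0 (ell n)) (fun j => if Nat.eqb j i then 1 else Ecomp j (p n j * t) (nth j (upd y i k) 0%nat))
       (fun j => if Nat.eqb j i then 1 else Ecomp j (p n j * t) (nth j y 0%nat))).
    ring.
    intros j _. destruct (Nat.eqb_spec j i); auto. rewrite nth_upd by lia.
    destruct (Nat.eqb_spec j i); [lia|auto].
  - rewrite fsum_scal_r, fsum_scal. reflexivity.
Qed.

Lemma gprod_0 y : gprod 0 y = prod_dist ell mu n y.
Proof. unfold gprod, prod_dist. apply fprod_ext. intros i _. rewrite Rmult_0_r. unfold Ecomp. apply evol_0. Qed.

Lemma evol_prod_factor t y : 0 <= t -> In y (prod_space ell m n) ->
  evol (prod_space ell m n) (prod_dist ell mu n) (prod_gen ell p L n) t y = gprod t y.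
Proof.
  intros Ht Hy.
  apply (ode_unique (prod_space ell m n) (prod_gen ell p L n)
     (fun t y => evol (prod_space ell m n) (prod_dist ell mu n) (prod_gen ell p L n) t y) gprod); auto.
  - intros; apply evol_derive.
  - intros; apply gprod_derive; auto.
  - intros y0 _. rewrite evol_0, gprod_0. auto.
Qed.
End Prod.


Lemma PE_nth ms x : In x (prod_enum ms) -> forall i, (i < length ms)%nat -> (nth i x 0 < nth i ms 0)%nat.
Proof. revert x; induction ms; intros x Hx i Hi; simpl in Hi; [lia|].
  destruct (PE_cons _ _ _ Hx) as (k & x' & -> & Hk & Hx'). destruct i; simpl; auto. apply IHms; auto; lia. Qed.

Lemma fprod_one {X} (l : list X) : fprod l (fun _ => 1) = 1.
Proof. induction l; simpl; auto. rewrite IHl; ring. Qed.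

Section ProdId.
Variables (ell : nat -> nat) (m : nat -> nat -> nat)
  (mu pi : nat -> nat -> nat -> R) (L : nat -> nat -> nat -> nat -> R)
  (p : nat -> nat -> R) (n : nat).
Hypothesis Hchain : forall i, (i < ell n)%nat -> finite_chain (seq 0 (m n i)) (mu n i) (L n i) (pi n i).

Lemma PS_sum_prod (f : nat -> nat -> R) :
  fsum (prod_space ell m n) (fun y => fprod (seq 0 (ell n)) (fun i => f i (nth i y 0%nat))) =
  fprod (seq 0 (ell n)) (fun i => fsum (seq 0 (m n i)) (f i)).
Proof.
  unfold prod_space. pose proof (PE_sum_prod (map (m n) (seq 0 (ell n))) f) as H.
  rewrite (ms_len ell m n) in H. rewrite H. apply fprod_ext. intros i Hi. apply in_seq in Hi.
  rewrite (ms_nth ell m n) by lia. auto.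
Qed.

Lemma PS_nth y i : In y (prod_space ell m n) -> (i < ell n)%nat -> In (nth i y 0%nat) (seq 0 (m n i)).
Proof. intros Hy Hi. apply in_seq. split; [lia|]. simpl.
  pose proof (PE_nth _ _ Hy i) as H. rewrite (ms_len ell m n), (ms_nth ell m n) in H by lia. specialize (H Hi). lia. Qed.

Definition Wprod t := fsum (prod_space ell m n) (fun y =>
  Rabs (evol (prod_space ell m n) (prod_dist ell mu n) (prod_gen ell p L n) t y / prod_dist ell pi n y - 1) ^ 2
  * prod_dist ell pi n y).

Definition Wi i tau := Wc (seq 0 (m n i)) (mu n i) (L n i) (pi n i) tau.

Lemma Wprod_id t : 0 <= t -> Wprod t = fprod (seq 0 (ell n)) (fun i => 1 + Wi i (p n i * t)) - 1.
Proof.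
  intros Ht.
  assert (Hpi : forall y, In y (prod_space ell m n) -> 0 < prod_dist ell pi n y).
  { intros y Hy. apply fprod_pos. intros i Hi. apply in_seq in Hi.
    apply (pi_pos _ _ _ _ (Hchain i ltac:(lia))). apply PS_nth; auto; lia. }
  unfold Wprod.
  transitivity (fsum (prod_space ell m n) (fun y => fprod (seq 0 (ell n)) (fun i =>
      (fun i k => Ecomp m mu L n i (p n i * t) k ^ 2 / pi n i k) i (nth i y 0%nat)))
     - 2 * fsum (prod_space ell m n) (fun y => fprod (seq 0 (ell n)) (fun i =>
      (fun i k => Ecomp m mu L n i (p n i * t) k) i (nth i y 0%nat)))
     + fsum (prod_space ell m n) (fun y => fprod (seq 0 (ell n)) (fun i => pi n i (nth i y 0%nat)))).
  - rewrite <- fsum_scal, <- fsum_minus, <- fsum_plus. apply fsum_ext. intros y Hy.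
    rewrite evol_prod_factor by auto. unfold gprod.
    rewrite pow2_abs.
    assert (Hq : fprod (seq 0 (ell n)) (fun i => Ecomp m mu L n i (p n i * t) (nth i y 0%nat) ^ 2 / pi n i (nth i y 0%nat))
       = fprod (seq 0 (ell n)) (fun i => Ecomp m mu L n i (p n i * t) (nth i y 0%nat)) ^ 2 / prod_dist ell pi n y).
    { unfold Rdiv. rewrite fprod_mult. unfold prod_dist. rewrite fprod_inv. f_equal. simpl. rewrite Rmult_1_r, <- fprod_mult. apply fprod_ext; intros; simpl; ring.
      intros i Hi. apply in_seq in Hi. apply Rgt_not_eq. apply (pi_pos _ _ _ _ (Hchain i ltac:(lia))). apply PS_nth; auto; lia. }
    rewrite Hq. fold (prod_dist ell pi n y). pose proof (Hpi y Hy). field. lra.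
  - rewrite (PS_sum_prod (fun i k => Ecomp m mu L n i (p n i * t) k ^ 2 / pi n i k)), (PS_sum_prod (fun i k => Ecomp m mu L n i (p n i * t) k)), PS_sum_prod.
    rewrite (fprod_ext _ (fun i => fsum (seq 0 (m n i)) (fun k => Ecomp m mu L n i (p n i * t) k))
      (fun _ => 1)).
    rewrite (fprod_ext _ (fun i => fsum (seq 0 (m n i)) (pi n i)) (fun _ => 1)).
    rewrite (fprod_ext _ (fun i => fsum (seq 0 (m n i)) (fun k => Ecomp m mu L n i (p n i * t) k ^ 2 / pi n i k))
      (fun i => 1 + Wi i (p n i * t))).
    rewrite fprod_one. ring.
    + intros i Hi. apply in_seq in Hi. unfold Wi. rewrite (Wc_eq _ _ _ _ (Hchain i ltac:(lia))). unfold Ecomp. ring.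
    + intros i Hi. apply in_seq in Hi. apply (pi_sum _ _ _ _ (Hchain i ltac:(lia))).
    + intros i Hi. apply in_seq in Hi. apply (mass _ _ _ _ (Hchain i ltac:(lia))).
Qed.
End ProdId.


Lemma prod_ineq {X} (l : list X) (a : X -> R) : (forall x, In x l -> 0 <= a x) ->
  fsum l a <= fprod l (fun x => 1 + a x) - 1 /\ fprod l (fun x => 1 + a x) <= exp (fsum l a) /\ 1 <= fprod l (fun x => 1 + a x).
Proof.
  induction l; simpl; intros H.
  - rewrite exp_0. lra.
  - destruct IHl as (H1 & H2 & H3). intros; auto.
    specialize (H a0 (or_introl eq_refl)). pose proof (exp_ineq1_le (a a0)).
    repeat split.
    + nra.
    + rewrite exp_plus. apply Rmult_le_compat; lra.
    + nra.
Qed.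

Lemma right_cont_of (f g : R -> R) eps :
  (forall T, 0 <= T -> continuity_pt g T) -> (forall t, 0 <= t -> f t = g t) ->
  forall T, 0 <= T -> eps < f T -> exists d, 0 < d /\ forall t, T <= t < T + d -> eps < f t.
Proof.
  intros Hc Hfg T HT HfT. rewrite Hfg in HfT by auto.
  specialize (Hc T HT). unfold continuity_pt, continue_in, limit1_in, limit_in in Hc.
  destruct (Hc (g T - eps) ltac:(lra)) as (d & Hd & Hd').
  exists d. split; auto. intros t Ht. rewrite Hfg by lra.
  destruct (Req_dec t T) as [->|Hne]; auto.
  assert (R_dist (g t) (g T) < g T - eps).
  { apply Hd'. split. unfold D_x, no_cond. split; auto. change (R_dist t T < d). unfold R_dist. rewrite Rabs_right; lra. }
  unfold R_dist in H. apply Rabs_def2 in H. lra.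
Qed.

Lemma min_time_spec (f : R -> R) eps :
  (exists t0, 0 <= t0 /\ f t0 <= eps) ->
  (forall T, 0 <= T -> eps < f T -> exists d, 0 < d /\ forall t, T <= t < T + d -> eps < f t) ->
  0 <= min_time f eps /\ f (min_time f eps) <= eps /\ forall t, 0 <= t -> f t <= eps -> min_time f eps <= t.
Proof.
  intros (t0 & Ht0 & Hf0) Hrc.
  set (E x := 0 <= - x /\ f (- x) <= eps).
  assert (Hb : bound E) by (exists 0; intros x [Hx _]; lra).
  destruct (completeness E Hb) as [M [HM1 HM2]].
  { exists (- t0). unfold E. rewrite Ropp_involutive. split; auto. }
  set (T := - M).
  assert (HT0 : 0 <= T).
  { unfold T. assert (M <= 0). apply HM2. intros x [Hx _]. lra. lra. }
  assert (Hlow : forall t, 0 <= t -> f t <= eps -> T <= t).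
  { intros t Ht Hft. unfold T. assert (- t <= M). apply HM1. unfold E. rewrite Ropp_involutive. auto. lra. }
  assert (HfT : f T <= eps).
  { destruct (Rle_dec (f T) eps) as [|Hn]; auto. exfalso.
    destruct (Hrc T HT0 ltac:(lra)) as (d & Hd & Hd').
    assert (Hub : is_upper_bound E (M - d)).
    { intros x [Hx Hfx]. destruct (Rle_dec x (M - d)) as [|Hc]; auto. exfalso.
      assert (T <= - x) by (apply Hlow; auto).
      specialize (Hd' (- x) ltac:(unfold T in *; split; lra)). lra. }
    specialize (HM2 _ Hub). lra. }
  unfold min_time.
  assert (Hex : exists T, 0 <= T /\ f T <= eps /\ forall t, 0 <= t -> f t <= eps -> T <= t) by eauto.
  pose proof (epsilon_spec (inhabits 0) (fun T => 0 <= T /\ f T <= eps /\ forall t, 0 <= t -> f t <= eps -> T <= t) Hex).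
  exact H.
Qed.

Section Final.
Variables (ell : nat -> nat) (m : nat -> nat -> nat)
  (mu pi : nat -> nat -> nat -> R) (L : nat -> nat -> nat -> nat -> R)
  (p : nat -> nat -> R).
Hypothesis Hchain : forall n i, (i < ell n)%nat -> finite_chain (seq 0 (m n i)) (mu n i) (L n i) (pi n i).
Hypothesis Hp : forall n i, (i < ell n)%nat -> 0 < p n i.

Let W n i tau := Wi m mu pi L n i tau.

Lemma W_nonneg n i t : (i < ell n)%nat -> 0 <= W n i t.
Proof. intros Hi. apply (Wc_nonneg _ _ _ _ (Hchain n i Hi)). Qed.

Lemma W_nonincr n i a b : (i < ell n)%nat -> a <= b -> W n i b <= W n i a.
Proof. intros Hi Hab. pose proof (Hchain n i Hi) as Hc.
  destruct (Wc_decay _ _ _ _ Hc) as (c & Hc0 & Hd).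
  apply (deriv_nonincr _ (Wd (seq 0 (m n i)) (mu n i) (L n i) (pi n i))); auto.
  intros t. apply Wc_derive; auto.
  intros t _. specialize (Hd t). pose proof (Wc_nonneg _ _ _ _ Hc t). nra. Qed.

Definition WD n i t := p n i * Wd (seq 0 (m n i)) (mu n i) (L n i) (pi n i) (p n i * t).

Lemma W_comp_derive n i t : (i < ell n)%nat ->
  is_derive (fun t => W n i (p n i * t)) t (WD n i t).
Proof. intros Hi. pose proof (Hchain n i Hi) as Hc.
  assert (Hl : is_derive (fun t : R => p n i * t) t (p n i)).
  { pose proof (is_derive_scal (fun t => t) t (p n i) 1 (is_derive_id (K := R_AbsRing) t)) as H. rewrite Rmult_1_r in H. exact H. }
  apply (is_derive_comp (fun tau => W n i tau) (fun t => p n i * t) t _ (p n i)); auto.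
  apply Wc_derive; auto. Qed.

Lemma W_decay n i d : (i < ell n)%nat -> 0 < d ->
  exists T, 0 <= T /\ forall t, T <= t -> W n i (p n i * t) <= d.
Proof.
  intros Hi Hd. pose proof (Hchain n i Hi) as Hc. pose proof (Hp n i Hi) as Hpi.
  destruct (Wc_decay _ _ _ _ Hc) as (c & Hc0 & Hdec).
  set (W0 := W n i 0).
  assert (HW0 : 0 <= W0) by apply W_nonneg, Hi.
  exists (W0 / (d * c * p n i)). split.
  { apply Rmult_le_pos; auto. left; apply Rinv_0_lt_compat. apply Rmult_lt_0_compat; auto. apply Rmult_lt_0_compat; auto. }
  intros t Ht.
  assert (Ht0 : 0 <= t).
  { eapply Rle_trans; [|apply Ht]. apply Rmult_le_pos; auto. left; apply Rinv_0_lt_compat. apply Rmult_lt_0_compat; auto. apply Rmult_lt_0_compat; auto. }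
  pose proof (gronwall _ _ c (Wc_derive _ _ _ _ Hc) Hdec (p n i * t) ltac:(nra)) as Hg.
  fold (Wi m mu pi L n i (p n i * t)) in Hg. fold (W n i (p n i * t)) in Hg.
  change (Wc (seq 0 (m n i)) (mu n i) (L n i) (pi n i) 0) with W0 in Hg.
  set (x := c * (p n i * t)).
  assert (Hx : W0 / d <= x).
  { unfold x. apply (Rmult_le_compat_l (d * c * p n i)) in Ht.
    replace (d * c * p n i * (W0 / (d * c * p n i))) with (W0) in Ht by (field; repeat split; lra).
    apply (Rmult_le_reg_l d); auto. replace (d * (W0 / d)) with W0 by (field; lra). nra.
    left. apply Rmult_lt_0_compat; auto. apply Rmult_lt_0_compat; auto. }
  pose proof (exp_ineq1_le x). pose proof (exp_pos x).
  replace (- c * (p n i * t)) with (- x) in Hg by (unfold x; ring).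
  rewrite exp_Ropp in Hg.
  apply Rle_trans with (/ exp x * W0); auto.
  apply (Rmult_le_reg_l (exp x)); auto. rewrite <- Rmult_assoc, Rinv_r by lra.
  assert (W0 <= d * x). { apply (Rmult_le_reg_l (/ d)). apply Rinv_0_lt_compat; auto.
    rewrite <- Rmult_assoc, Rinv_l, Rmult_1_l by lra. unfold Rdiv in Hx. lra. }
  nra.
Qed.

Definition Sfun n t := fsum (seq 0 (ell n)) (fun i => W n i (p n i * t)).
Definition Pfun n t := fprod (seq 0 (ell n)) (fun i => 1 + W n i (p n i * t)).

Lemma Ssum_eq n t : Ssum ell m mu pi L p n t = Sfun n t.
Proof. unfold Ssum, Sfun. apply fsum_ext. intros i Hi. apply in_seq in Hi.
  unfold dcomp, Defs.d2. rewrite pow2_sqrt. reflexivity. apply (W_nonneg n i (p n i * t)). lia. Qed.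

Lemma dprod_eq n t : 0 <= t -> dprod ell m mu pi L p n t = sqrt (Pfun n t - 1).
Proof. intros Ht. unfold dprod, Defs.d2. f_equal.
  apply (Wprod_id ell m mu pi L p n (Hchain n) t Ht). Qed.

Lemma sandwich n t : 0 <= t ->
  0 <= Sfun n t /\ Sfun n t <= (dprod ell m mu pi L p n t) ^ 2 /\
  (dprod ell m mu pi L p n t) ^ 2 <= exp (Sfun n t) - 1 /\ 0 <= dprod ell m mu pi L p n t.
Proof.
  intros Ht. rewrite dprod_eq by auto.
  destruct (prod_ineq (seq 0 (ell n)) (fun i => W n i (p n i * t))) as (H1 & H2 & H3).
  { intros i Hi. apply in_seq in Hi. apply W_nonneg; lia. }
  fold (Sfun n t) in *. fold (Pfun n t) in *.
  rewrite pow2_sqrt by lra. repeat split; try lra. apply fsum_nonneg. intros i Hi. apply in_seq in Hi. apply W_nonneg; lia.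
  apply sqrt_pos.
Qed.

Lemma S_nonincr n a b : 0 <= a <= b -> Sfun n b <= Sfun n a.
Proof. intros Hab. unfold Sfun. apply fsum_le. intros i Hi. apply in_seq in Hi.
  apply W_nonincr. lia. pose proof (Hp n i ltac:(lia)). nra. Qed.

Lemma S_small n d : 0 < d -> exists t, 0 <= t /\ Sfun n t <= d.
Proof.
  intros Hd. set (d' := d / (INR (ell n) + 1)).
  assert (Hd' : 0 < d') by (unfold d'; apply Rdiv_lt_0_compat; auto; pose proof (pos_INR (ell n)); lra).
  destruct (finite_bound (seq 0 (ell n)) (fun i T => 0 <= T /\ forall t, T <= t -> W n i (p n i * t) <= d')) as [T HT].
  - intros i K K' [HK HK'] HKK'. split. lra. intros t Ht. apply HK'. lra.
  - intros i Hi. apply in_seq in Hi. apply W_decay; auto; lia.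
  - exists (Rabs T). split. apply Rabs_pos.
    apply Rle_trans with (fsum (seq 0 (ell n)) (fun _ => d')).
    + apply fsum_le. intros i Hi. apply (HT i Hi). apply Rle_abs.
    + rewrite fsum_const, length_seq. unfold d'. pose proof (pos_INR (ell n)).
      assert (d / (INR (ell n) + 1) * INR (ell n) <= d / (INR (ell n) + 1) * (INR (ell n) + 1)).
      { apply Rmult_le_compat_l. fold d'; lra. lra. }
      replace (d / (INR (ell n) + 1) * (INR (ell n) + 1)) with d in H0 by (field; lra). lra.
Qed.

Lemma S_cont n T : continuity_pt (Sfun n) T.
Proof.
  apply (is_derive_cont _ _ (fsum (seq 0 (ell n)) (fun i => WD n i T))).
  apply (is_derive_fsum (seq 0 (ell n)) (fun i t => W n i (p n i * t))).
  intros i Hi. apply in_seq in Hi. apply W_comp_derive. lia.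
Qed.

Lemma P_cont n T : continuity_pt (Pfun n) T.
Proof.
  eapply is_derive_cont.
  apply (is_derive_fprod (seq 0 (ell n)) (fun i t => 1 + W n i (p n i * t)) (fun i => WD n i T)).
  apply seq_NoDup.
  intros i Hi. apply in_seq in Hi.
  apply (is_derive_rw _ _ (plus 0 (WD n i T))). unfold plus; simpl. ring.
  apply (is_derive_plus (K := R_AbsRing) (V := R_NormedModule) (fun _ => 1)).
  apply (is_derive_const (K := R_AbsRing) (V := R_NormedModule) 1 T).
  apply W_comp_derive. lia.
Qed.
End Final.


Section Final2.
Variables (ell : nat -> nat) (m : nat -> nat -> nat)
  (mu pi : nat -> nat -> nat -> R) (L : nat -> nat -> nat -> nat -> R)
  (p : nat -> nat -> R).
Hypothesis Hchain : forall n i, (i < ell n)%nat -> finite_chain (seq 0 (m n i)) (mu n i) (L n i) (pi n i).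
Hypothesis Hp : forall n i, (i < ell n)%nat -> 0 < p n i.

Lemma P_ge1 n t : 1 <= Pfun ell m mu pi L p n t.
Proof. unfold Pfun. destruct (prod_ineq (seq 0 (ell n)) (fun i => Wi m mu pi L n i (p n i * t))) as (_ & _ & H3); auto.
  intros i Hi. apply in_seq in Hi. apply (W_nonneg ell m mu pi L Hchain). lia. Qed.

Lemma fd_rc n e : forall T, 0 <= T -> e < dprod ell m mu pi L p n T ->
  exists d, 0 < d /\ forall t, T <= t < T + d -> e < dprod ell m mu pi L p n t.
Proof.
  apply (right_cont_of _ (fun t => sqrt (Pfun ell m mu pi L p n t - 1))).
  - intros T HT.
    apply (continuity_pt_comp (fun t => Pfun ell m mu pi L p n t - 1) sqrt T).
    + apply (continuity_pt_minus (Pfun ell m mu pi L p n) (fun _ => 1)).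
      apply (P_cont ell m mu pi L p Hchain). apply continuity_pt_const. intros x y; auto.
    + apply continuity_pt_sqrt. pose proof (P_ge1 n T). lra.
  - intros t Ht. apply (dprod_eq ell m mu pi L p Hchain); auto.
Qed.

Lemma fs_rc n e : forall T, 0 <= T -> e < Ssum ell m mu pi L p n T ->
  exists d, 0 < d /\ forall t, T <= t < T + d -> e < Ssum ell m mu pi L p n t.
Proof.
  apply (right_cont_of _ (Sfun ell m mu pi L p n)).
  - intros T _. apply (S_cont ell m mu pi L p Hchain).
  - intros t _. apply (Ssum_eq ell m mu pi L p Hchain).
Qed.

Lemma sw n t : 0 <= t ->
  0 <= Ssum ell m mu pi L p n t /\ Ssum ell m mu pi L p n t <= (dprod ell m mu pi L p n t) ^ 2 /\
  (dprod ell m mu pi L p n t) ^ 2 <= exp (Ssum ell m mu pi L p n t) - 1 /\ 0 <= dprod ell m mu pi L p n t.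
Proof. intros Ht. rewrite (Ssum_eq ell m mu pi L p Hchain). apply (sandwich ell m mu pi L p Hchain); auto. Qed.

Lemma fs_nonincr n a b : 0 <= a <= b -> Ssum ell m mu pi L p n b <= Ssum ell m mu pi L p n a.
Proof. intros H. rewrite !(Ssum_eq ell m mu pi L p Hchain). apply (S_nonincr ell m mu pi L p Hchain Hp); auto. Qed.

Lemma fs_small n d : 0 < d -> exists t, 0 <= t /\ Ssum ell m mu pi L p n t <= d.
Proof. intros Hd. destruct (S_small ell m mu pi L p Hchain Hp n d Hd) as (t & Ht & H).
  exists t. rewrite (Ssum_eq ell m mu pi L p Hchain). auto. Qed.

Lemma part2 n eps : 0 < eps ->
     min_time (dprod ell m mu pi L p n) (sqrt (exp eps - 1))
       <= min_time (Ssum ell m mu pi L p n) eps /\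
     min_time (Ssum ell m mu pi L p n) eps
       <= min_time (dprod ell m mu pi L p n) (sqrt eps).
Proof.
  intros He.
  set (fs := Ssum ell m mu pi L p n). set (fd := dprod ell m mu pi L p n).
  destruct (min_time_spec fs eps) as (HT1 & HfT1 & HminS).
  { destruct (fs_small n eps He) as (t & Ht & H). eauto. }
  { apply fs_rc. }
  set (T1 := min_time fs eps) in *.
  assert (Hd1 : fd T1 <= sqrt (exp eps - 1)).
  { destruct (sw n T1 HT1) as (_ & _ & H3 & H4). fold fs fd in H3, H4.
    rewrite <- (sqrt_pow2 (fd T1)) by auto. apply sqrt_le_1_alt.
    assert (exp (fs T1) <= exp eps) by (destruct (Rle_lt_or_eq_dec _ _ HfT1) as [Hl|Hl]; [left; apply exp_increasing; auto | rewrite Hl; lra]).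
    lra. }
  destruct (min_time_spec fd (sqrt (exp eps - 1))) as (_ & _ & HminD1).
  { exists T1; auto. }
  { apply fd_rc. }
  split. apply HminD1; auto.
  destruct (min_time_spec fd (sqrt eps)) as (HT2 & HfT2 & _).
  { destruct (fs_small n (ln (1 + eps))) as (t & Ht & H).
    { rewrite <- ln_1. apply ln_increasing; lra. }
    exists t. split; auto. fold fs in H. destruct (sw n t Ht) as (_ & _ & H3 & H4). fold fs fd in H3, H4.
    rewrite <- (sqrt_pow2 (fd t)) by auto. apply sqrt_le_1_alt.
    assert (exp (fs t) <= 1 + eps).
    { rewrite <- (exp_ln (1 + eps)) by lra. destruct (Rle_lt_or_eq_dec _ _ H) as [Hl|Hl]; [left; apply exp_increasing; auto | rewrite Hl; lra]. }
    lra. }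
  { apply fd_rc. }
  apply HminS; auto.
  destruct (sw n _ HT2) as (_ & H2 & _ & H4). fold fs fd in H2, H4.
  assert (fd (min_time fd (sqrt eps)) ^ 2 <= eps).
  { apply Rle_trans with (sqrt eps ^ 2). apply pow_incr; split; auto. rewrite pow2_sqrt; lra. }
  lra.
Qed.

Lemma part1 : L2_cutoff (dprod ell m mu pi L p) <->
   exists tn : nat -> R, (forall n, 0 < tn n) /\
     (forall a, 1 < a -> Un_cv (fun n => Ssum ell m mu pi L p n (a * tn n)) 0) /\
     (forall a, 0 < a < 1 -> cv_infty (fun n => Ssum ell m mu pi L p n (a * tn n))).
Proof.
  split.
  - intros [tn [Htn H]]. exists tn. split; auto. split.
    + intros a Ha. set (a' := Rmin (a-1) (1/2)).
      assert (Ha' : 0 < a' < 1) by (unfold a'; split; [apply Rmin_glb_lt; lra | pose proof (Rmin_r (a-1) (1/2)); lra]).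
      destruct (H a' Ha') as [Hcv _].
      intros e He. destruct (Hcv (sqrt e) (sqrt_lt_R0 e He)) as [N HN]. exists N. intros k Hk. specialize (HN k Hk).
      unfold R_dist in *. rewrite Rminus_0_r in *.
      pose proof (Htn k).
      assert (Hle : (1 + a') * tn k <= a * tn k).
      { apply Rmult_le_compat_r. lra. pose proof (Rmin_l (a-1) (1/2)). unfold a' in *. lra. }
      destruct (sw k ((1 + a') * tn k)) as (_ & H2 & _ & H4). nra.
      destruct (sw k (a * tn k)) as (H1' & _). nra.
      pose proof (fs_nonincr k ((1 + a') * tn k) (a * tn k) ltac:(split; nra)).
      rewrite Rabs_right in HN by lra. rewrite Rabs_right by lra.
      assert (dprod ell m mu pi L p k ((1 + a') * tn k) ^ 2 < e).
      { pose proof (sqrt_sqrt e ltac:(lra)). pose proof (sqrt_pos e). simpl. nra. }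
      lra.
    + intros a Ha. destruct (H (1 - a) ltac:(lra)) as [_ Hinf].
      intros M. destruct (Hinf (exp (Rabs M))) as [N HN]. exists N. intros k Hk. specialize (HN k Hk).
      cbv beta in HN. replace ((1 - (1 - a)) * tn k) with (a * tn k) in HN by ring.
      pose proof (Htn k).
      destruct (sw k (a * tn k)) as (_ & _ & H3 & H4). nra.
      pose proof (exp_ineq1_le (Rabs M)). pose proof (Rabs_pos M).
      set (d := dprod ell m mu pi L p k (a * tn k)) in *.
      assert (exp (Rabs M) < d ^ 2) by (simpl; nra).
      assert (Hx : exp (Rabs M) < exp (Ssum ell m mu pi L p k (a * tn k))) by lra.
      apply exp_lt_inv in Hx. pose proof (Rle_abs M). lra.
  - intros [tn [Htn [H1 H2]]]. exists tn. split; auto. intros a Ha. split.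
    + intros e He.
      assert (He' : 0 < ln (1 + e ^ 2)) by (rewrite <- ln_1; apply ln_increasing; [lra | pose proof (pow_lt e 2 He); lra]).
      destruct (H1 (1 + a) ltac:(lra) _ He') as [N HN]. exists N. intros k Hk. specialize (HN k Hk).
      unfold R_dist in *. rewrite Rminus_0_r in *.
      pose proof (Htn k).
      destruct (sw k ((1 + a) * tn k)) as (H0 & _ & H3 & H4). nra.
      rewrite Rabs_right in HN by lra. rewrite Rabs_right by lra.
      pose proof (exp_increasing _ _ HN). rewrite exp_ln in H5 by (pose proof (pow2_ge_0 e); lra).
      set (d := dprod ell m mu pi L p k ((1 + a) * tn k)) in *.
      assert (d ^ 2 < e ^ 2) by lra.
      destruct (Rlt_or_le d e) as [|Hde]; auto.
      assert (e ^ 2 <= d ^ 2) by (apply pow_incr; lra). lra.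
    + intros M. destruct (H2 (1 - a) ltac:(lra) (M ^ 2)) as [N HN]. exists N. intros k Hk. specialize (HN k Hk).
      cbv beta in HN. pose proof (Htn k).
      destruct (sw k ((1 - a) * tn k)) as (_ & H3 & _ & H4). nra.
      set (d := dprod ell m mu pi L p k ((1 - a) * tn k)) in *.
      destruct (Rlt_or_le M 0). lra.
      destruct (Rlt_or_le M d) as [|Hd]; auto.
      assert (d ^ 2 <= M ^ 2) by (apply pow_incr; lra). lra.
Qed.
End Final2.


Theorem proposition4p1
  (ell : nat -> nat) (m : nat -> nat -> nat)
  (mu pi : nat -> nat -> nat -> R) (L : nat -> nat -> nat -> nat -> R)
  (p : nat -> nat -> R)
  (Hchain : forall n i, (i < ell n)%nat ->
     finite_chain (seq 0 (m n i)) (mu n i) (L n i) (pi n i))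
  (Hp : forall n i, (i < ell n)%nat -> 0 < p n i)
  (Hpsum : forall n, fsum (seq 0 (ell n)) (p n) <= 1) :
  (L2_cutoff (dprod ell m mu pi L p) <->
   exists tn : nat -> R, (forall n, 0 < tn n) /\
     (forall a, 1 < a -> Un_cv (fun n => Ssum ell m mu pi L p n (a * tn n)) 0) /\
     (forall a, 0 < a < 1 -> cv_infty (fun n => Ssum ell m mu pi L p n (a * tn n))))
  /\
  (forall n eps, 0 < eps ->
     min_time (dprod ell m mu pi L p n) (sqrt (exp eps - 1))
       <= min_time (Ssum ell m mu pi L p n) eps /\
     min_time (Ssum ell m mu pi L p n) eps
       <= min_time (dprod ell m mu pi L p n) (sqrt eps)).
Proof.
  split.
  - apply (part1 ell m mu pi L p Hchain Hp).
  - intros n eps He. apply (part2 ell m mu pi L p Hchain Hp n eps He).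
Qed.
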